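(* Let $K$ be a finite subgroup of $U(\mathbb{H})$ and consider the reflection system $L=K$. Then $H_K=[K,K]=\langle aba^{-1}b^{-1}: a,b\in K\rangle$, the commutator subgroup of $K$. Therefore the reflection groups in canonical form with $L=K$ are the groups $G_K(K,H)$ where $H$ is a subgroup of $K$ with $[K,K]\subseteq H\subseteq K$ (any such $H$ is automatically normal in $K$).
   Context: $\mathbb{H}$ is the real quaternion algebra with basis $1,i,j,k$ and $U(\mathbb{H})$ its group of unit quaternions. For a group $K$ and $a,b\in K$ put $a\circ b:=ab^{-1}a$. A reflection system for a finite group $K$ is a subset $L\subseteq K$ which generates $K$, is closed under $\circ$, and contains $1$ (so $K$ itself is a reflection system for $K$). For $b\in K$ let $M_b=\begin{pmatrix}0&b\\ b^{-1}&0\end{pmatrix}$. For a reflection system $L$, $H_L:=\{h\in K:\mathrm{diag}(h,1)\in\langle M_b: b\in L\rangle\}$. For $H\trianglelefteq K$ with $H\subseteq L$, $LH=L$, $G(K,L,H)$ is the subgroup of $U(\mathbb{H}^2)$ generated by $\mathrm{diag}(h,1),\mathrm{diag}(1,h)$ ($h\in H$) and $M_b$ ($b\in L$); it is in canonical form, written $G_K(L,H)$, if $\{b\in K: M_b\in G(K,L,H)\}=L$. *)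

(* Defs.v *)
From HB Require Import structures.
From mathcomp Require Import all_boot all_order all_algebra.
From mathcomp Require Import reals.
From Stdlib Require List.
Set Implicit Arguments. Unset Strict Implicit. Unset Printing Implicit Defensive.
Import Order.TTheory GRing.Theory Num.Theory.
Local Open Scope ring_scope.

Section Quat.
Variable R : realType.

Record quat := Quat { qr : R; qi : R; qj : R; qk : R }.

Definition q1 : quat := Quat 1 0 0 0.
Definition q0 : quat := Quat 0 0 0 0.

Definition qmul (x y : quat) : quat :=
  Quat (qr x * qr y - qi x * qi y - qj x * qj y - qk x * qk y)
       (qr x * qi y + qi x * qr y + qj x * qk y - qk x * qj y)
       (qr x * qj y - qi x * qk y + qj x * qr y + qk x * qi y)
       (qr x * qk y + qi x * qj y - qj x * qi y + qk x * qr y).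

Definition qadd (x y : quat) : quat :=
  Quat (qr x + qr y) (qi x + qi y) (qj x + qj y) (qk x + qk y).

Definition qconj (x : quat) : quat := Quat (qr x) (- qi x) (- qj x) (- qk x).

Definition qnorm2 (x : quat) : R := qr x ^+ 2 + qi x ^+ 2 + qj x ^+ 2 + qk x ^+ 2.

Definition qinv (x : quat) : quat :=
  let n := (qnorm2 x)^-1 in Quat (qr x * n) (- qi x * n) (- qj x * n) (- qk x * n).

Definition unitq (x : quat) : Prop := qnorm2 x = 1.

Inductive gen (T : Type) (mul : T -> T -> T) (inv : T -> T) (one : T)
    (S : T -> Prop) : T -> Prop :=
  | gen_in x : S x -> gen mul inv one S x
  | gen_one : gen mul inv one S one
  | gen_mul x y : gen mul inv one S x -> gen mul inv one S y -> gen mul inv one S (mul x y)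
  | gen_inv x : gen mul inv one S x -> gen mul inv one S (inv x).

Definition is_qsubgroup (K : quat -> Prop) : Prop :=
  [/\ K q1, (forall x y, K x -> K y -> K (qmul x y)) & (forall x, K x -> K (qinv x))].

Definition finite_subgroup_UH (K : quat -> Prop) : Prop :=
  [/\ is_qsubgroup K, (forall x, K x -> unitq x)
    & exists s : seq quat, forall x, K x -> List.In x s].

Definition commK (K : quat -> Prop) : quat -> Prop :=
  gen qmul qinv q1 (fun x => exists a b, [/\ K a, K b &
                       x = qmul (qmul (qmul a b) (qinv a)) (qinv b)]).

Definition qcirc (a b : quat) : quat := qmul (qmul a (qinv b)) a.

Definition reflection_system (K L : quat -> Prop) : Prop :=
  [/\ (forall x, L x -> K x),
      (forall x, K x <-> gen qmul qinv q1 L x),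
      (forall a b, L a -> L b -> L (qcirc a b)) & L q1].

Record qmat := QMat { m11 : quat; m12 : quat; m21 : quat; m22 : quat }.

Definition mmul (A B : qmat) : qmat :=
  QMat (qadd (qmul (m11 A) (m11 B)) (qmul (m12 A) (m21 B)))
       (qadd (qmul (m11 A) (m12 B)) (qmul (m12 A) (m22 B)))
       (qadd (qmul (m21 A) (m11 B)) (qmul (m22 A) (m21 B)))
       (qadd (qmul (m21 A) (m12 B)) (qmul (m22 A) (m22 B))).

(** Conjugate transpose: the inverse in U(H^2). *)
Definition mstar (A : qmat) : qmat :=
  QMat (qconj (m11 A)) (qconj (m21 A)) (qconj (m12 A)) (qconj (m22 A)).

Definition mone : qmat := QMat q1 q0 q0 q1.

Definition diagm (x y : quat) : qmat := QMat x q0 q0 y.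

Definition Mb (b : quat) : qmat := QMat q0 b (qinv b) q0.

Definition mgen (S : qmat -> Prop) : qmat -> Prop := gen mmul mstar mone S.

Definition H_L (K L : quat -> Prop) (h : quat) : Prop :=
  K h /\ mgen (fun M => exists b, L b /\ M = Mb b) (diagm h q1).

Definition GKLH (K L H : quat -> Prop) : qmat -> Prop :=
  mgen (fun M => (exists h, H h /\ (M = diagm h q1 \/ M = diagm q1 h))
                 \/ (exists b, L b /\ M = Mb b)).

Definition normal_in (H K : quat -> Prop) : Prop :=
  [/\ is_qsubgroup H, (forall x, H x -> K x)
    & forall k h, K k -> H h -> H (qmul (qmul k h) (qinv k))].

Definition admissible (K L H : quat -> Prop) : Prop :=
  [/\ normal_in H K, (forall x, H x -> L x)
    & forall l, K l -> (L l <-> exists l' h, [/\ L l', H h & l = qmul l' h])].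

Definition canonical_form (K L H : quat -> Prop) : Prop :=
  forall b, K b -> (GKLH K L H (Mb b) <-> L b).

End Quat.

(* Main.v *)
Require Import Defs.
From mathcomp Require Import all_boot all_order all_algebra reals.
From mathcomp Require Import ring.
Set Implicit Arguments. Unset Strict Implicit. Unset Printing Implicit Defensive.
Import Order.TTheory GRing.Theory Num.Theory.
Local Open Scope ring_scope.

Section Q.
Variable R : realType.
Implicit Types x y z k : quat R.

Lemma qmulA x y z : qmul (qmul x y) z = qmul x (qmul y z).
Proof. by case: x => ????; case: y => ????; case: z => ????; rewrite /qmul /=; congr Quat; ring. Qed.
Lemma qmul1q x : qmul (q1 R) x = x.
Proof. by case: x => ????; rewrite /qmul /=; congr Quat; ring. Qed.
Lemma qmulq1 x : qmul x (q1 R) = x.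
Proof. by case: x => ????; rewrite /qmul /=; congr Quat; ring. Qed.
Lemma qmul0q x : qmul (q0 R) x = q0 R.
Proof. by case: x => ????; rewrite /qmul /=; congr Quat; ring. Qed.
Lemma qmulq0 x : qmul x (q0 R) = q0 R.
Proof. by case: x => ????; rewrite /qmul /=; congr Quat; ring. Qed.
Lemma qadd0q x : qadd (q0 R) x = x.
Proof. by case: x => ????; rewrite /qadd /=; congr Quat; ring. Qed.
Lemma qaddq0 x : qadd x (q0 R) = x.
Proof. by case: x => ????; rewrite /qadd /=; congr Quat; ring. Qed.
Lemma qconj0 : qconj (q0 R) = q0 R.
Proof. by rewrite /qconj /= oppr0. Qed.
Lemma qconj1 : qconj (q1 R) = q1 R.
Proof. by rewrite /qconj /= oppr0. Qed.
Lemma qconjM x y : qconj (qmul x y) = qmul (qconj y) (qconj x).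
Proof. by case: x => ????; case: y => ????; rewrite /qmul /qconj /=; congr Quat; ring. Qed.
Lemma qnorm2M x y : qnorm2 (qmul x y) = qnorm2 x * qnorm2 y.
Proof. by case: x => ????; case: y => ????; rewrite /qmul /qnorm2 /=; ring. Qed.
Lemma qmulC_r x : qmul x (qconj x) = Quat (qnorm2 x) 0 0 0.
Proof. by case: x => ????; rewrite /qmul /qconj /qnorm2 /=; congr Quat; ring. Qed.
Lemma qmulC_l x : qmul (qconj x) x = Quat (qnorm2 x) 0 0 0.
Proof. by case: x => ????; rewrite /qmul /qconj /qnorm2 /=; congr Quat; ring. Qed.
Lemma qinvE x : unitq x -> qinv x = qconj x.
Proof. by rewrite /unitq /qinv => ->; rewrite invr1 !mulr1; case: x. Qed.
Lemma unitM x y : unitq x -> unitq y -> unitq (qmul x y).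
Proof. by rewrite /unitq qnorm2M => -> ->; rewrite mulr1. Qed.
Lemma q1_neq0 : q1 R <> q0 R.
Proof. by case=> /eqP; rewrite oner_eq0. Qed.
Lemma not_unit0 : ~ unitq (q0 R).
Proof. rewrite /unitq /qnorm2 /= => /eqP. by rewrite expr0n /= !addr0 eq_sym oner_eq0. Qed.
Lemma unit1 : unitq (q1 R).
Proof. by rewrite /unitq /qnorm2 /= expr1n expr0n /= !addr0. Qed.
Lemma qinv1 : qinv (q1 R) = q1 R.
Proof. by rewrite qinvE ?qconj1 //; apply: unit1. Qed.
Lemma cancR x : unitq x -> qmul x (qconj x) = q1 R.
Proof. by rewrite qmulC_r /unitq => ->. Qed.
Lemma cancL x : unitq x -> qmul (qconj x) x = q1 R.
Proof. by rewrite qmulC_l /unitq => ->. Qed.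
Lemma cancR' x z : unitq x -> qmul x (qmul (qconj x) z) = z.
Proof. by move=> u; rewrite -qmulA cancR // qmul1q. Qed.
Lemma cancL' x z : unitq x -> qmul (qconj x) (qmul x z) = z.
Proof. by move=> u; rewrite -qmulA cancL // qmul1q. Qed.



Lemma diag_mul x y x' y' : mmul (QMat x (q0 R) (q0 R) y) (QMat x' (q0 R) (q0 R) y')
  = QMat (qmul x x') (q0 R) (q0 R) (qmul y y').
Proof. by rewrite /mmul /= !(qmul0q, qmulq0, qadd0q, qaddq0). Qed.
Lemma da_mul x y x' y' : mmul (QMat x (q0 R) (q0 R) y) (QMat (q0 R) x' y' (q0 R))
  = QMat (q0 R) (qmul x x') (qmul y y') (q0 R).
Proof. by rewrite /mmul /= !(qmul0q, qmulq0, qadd0q, qaddq0). Qed.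
Lemma ad_mul x y x' y' : mmul (QMat (q0 R) x y (q0 R)) (QMat x' (q0 R) (q0 R) y')
  = QMat (q0 R) (qmul x y') (qmul y x') (q0 R).
Proof. by rewrite /mmul /= !(qmul0q, qmulq0, qadd0q, qaddq0). Qed.
Lemma aa_mul x y x' y' : mmul (QMat (q0 R) x y (q0 R)) (QMat (q0 R) x' y' (q0 R))
  = QMat (qmul x y') (q0 R) (q0 R) (qmul y x').
Proof. by rewrite /mmul /= !(qmul0q, qmulq0, qadd0q, qaddq0). Qed.

Definition Inv (P : quat R -> quat R -> Prop) (M : qmat R) :=
  (m12 M = q0 R /\ m21 M = q0 R /\ P (m11 M) (m22 M)) \/
  (m11 M = q0 R /\ m22 M = q0 R /\ P (m12 M) (m21 M)).

Lemma Inv_gen (P : quat R -> quat R -> Prop) (S : qmat R -> Prop) :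
  P (q1 R) (q1 R) ->
  (forall x y x' y', P x y -> P x' y' -> P (qmul x x') (qmul y y')) ->
  (forall x y x' y', P x y -> P x' y' -> P (qmul x y') (qmul y x')) ->
  (forall x y, P x y -> P (qconj x) (qconj y)) ->
  (forall x y, P x y -> P (qconj y) (qconj x)) ->
  (forall M, S M -> Inv P M) -> forall M, mgen S M -> Inv P M.
Proof.
move=> P11 Pd Pa Ps Pt hS M; elim=> {M} [M /hS //| |M N _ IM _ IN|M _ IM].
- by left.
- case: M IM => a b c d; case: N IN => a' b' c' d'.
  rewrite /Inv /= => [[[-> [-> p']]|[-> [-> p']]] [[-> [-> p]]|[-> [-> p]]]].
  all: rewrite ?(qmul0q, qmulq0, qadd0q, qaddq0).
  all: try (left; do !split; first [exact: Pd p p' | exact: Pa p p']; done).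
  all: try (right; do !split; first [exact: Pd p p' | exact: Pa p p']; done).
- case: M IM => a b c d; rewrite /Inv /mstar /= => [[[-> [-> p]]|[-> [-> p]]]];
  rewrite qconj0; [left|right]; do !split.
  + exact: Ps p.
  + exact: Pt p.
Qed.

Lemma mgen_mono (S T : qmat R -> Prop) :
  (forall M, S M -> mgen T M) -> forall M, mgen S M -> mgen T M.
Proof.
move=> h M; elim=> {M} [M /h //| |M N _ ? _ ?|M _ ?].
- exact: gen_one.
- exact: gen_mul.
- exact: gen_inv.
Qed.

Lemma MbMb x y : mmul (Mb x) (Mb y) = diagm (qmul x (qinv y)) (qmul (qinv x) y).
Proof. by rewrite /Mb aa_mul. Qed.

Lemma Mb1_conj h : mmul (mmul (Mb (q1 R)) (diagm h (q1 R))) (Mb (q1 R)) = diagm (q1 R) h.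
Proof. by rewrite /Mb qinv1 /diagm ad_mul aa_mul !qmulq1 !qmul1q. Qed.

Lemma qcc x : qconj (qconj x) = x.
Proof. by case: x => ????; rewrite /qconj !opprK. Qed.

Section Grp.
Variable K : quat R -> Prop.
Hypothesis K1 : K (q1 R).
Hypothesis Kmul : forall x y, K x -> K y -> K (qmul x y).
Hypothesis Kinv : forall x, K x -> K (qinv x).
Hypothesis Kunit : forall x, K x -> unitq x.

Lemma Kconj x : K x -> K (qconj x).
Proof. by move=> kx; rewrite -(qinvE (Kunit kx)); apply: Kinv. Qed.

Local Notation C := (commK K).

Lemma CK x : C x -> K x.
Proof.
elim=> {x} [x [a [b [ka kb ->]]]| |x y _ ? _ ?|x _ ?]; by auto.
Qed.

Lemma Cmul x y : C x -> C y -> C (qmul x y). Proof. exact: gen_mul. Qed.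
Lemma Cinv x : C x -> C (qinv x). Proof. exact: gen_inv. Qed.
Lemma C1 : C (q1 R). Proof. exact: gen_one. Qed.
Lemma Ccomm a b : K a -> K b -> C (qmul (qmul (qmul a b) (qconj a)) (qconj b)).
Proof. by move=> ka kb; apply: gen_in; exists a, b; rewrite (qinvE (Kunit ka)) (qinvE (Kunit kb)). Qed.

Lemma Cconj k h : K k -> C h -> C (qmul (qmul k h) (qconj k)).
Proof.
move=> kk; have uk := Kunit kk; elim=> {h} [x [a [b [ka kb ->]]]| |x y cx Ix cy Iy|x cx Ix].
- have e : qmul (qmul k (qmul (qmul (qmul a b) (qinv a)) (qinv b))) (qconj k)
    = qmul (qmul (qmul (qmul (qmul k a) (qconj k)) (qmul (qmul k b) (qconj k)))
        (qconj (qmul (qmul k a) (qconj k)))) (qconj (qmul (qmul k b) (qconj k))).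
    rewrite (qinvE (Kunit ka)) (qinvE (Kunit kb)) !qconjM.
    have qcc z : qconj (qconj z) = z by case: z => ????; rewrite /qconj !opprK.
    by rewrite !qcc !qmulA !cancL'.
  by rewrite e; apply: Ccomm; auto using Kconj.
- by rewrite qmulq1 cancR //; apply: C1.
- have e : qmul (qmul k (qmul x y)) (qconj k) =
     qmul (qmul (qmul k x) (qconj k)) (qmul (qmul k y) (qconj k)).
    by rewrite !qmulA cancL'.
  by rewrite e; apply: Cmul.
- have ux : unitq x by apply: Kunit; apply: CK.
  have e : qmul (qmul k (qinv x)) (qconj k) = qinv (qmul (qmul k x) (qconj k)).
    rewrite (qinvE ux) (qinvE (unitM (unitM uk ux) (Kunit (Kconj kk)))).
    have qcc z : qconj (qconj z) = z by case: z => ????; rewrite /qconj !opprK.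
    by rewrite !qconjM qcc !qmulA.
  by rewrite e; apply: Cinv.
Qed.

Lemma Cswap p u v w : K p -> K u -> K v -> K w ->
  C (qmul p (qmul v (qmul u w))) -> C (qmul p (qmul u (qmul v w))).
Proof.
move=> kp ku kv kw c; have uu := Kunit ku; have up := Kunit kp; have uv := Kunit kv.
have e : qmul p (qmul u (qmul v w)) =
  qmul (qmul (qmul p (qmul (qmul (qmul u v) (qconj u)) (qconj v))) (qconj p))
       (qmul p (qmul v (qmul u w))).
  by rewrite !qmulA !cancL'.
by rewrite e; apply: Cmul => //; apply: Cconj => //; apply: Ccomm.
Qed.

Lemma Crev x y : K x -> K y -> C (qmul x y) -> C (qmul y x).
Proof.
move=> kx ky c; have uy := Kunit ky.
have e : qmul y x = qmul (qmul y (qmul x y)) (qconj y).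
  by rewrite !qmulA cancR // qmulq1.
by rewrite e; apply: Cconj.
Qed.


Definition PC (x y : quat R) := [/\ K x, K y & C (qmul x y)].

Lemma HL_C h : H_L K K h -> C h.
Proof.
case=> kh hg.
have := @Inv_gen PC _ _ _ _ _ _ _ _ hg.
case.
- by split => //; rewrite qmulq1; apply: C1.
- move=> x y x' y' [kx ky cxy] [kx' ky' cxy']; split; auto.
  rewrite qmulA; apply: Cswap => //.
  by rewrite -qmulA; apply: Cmul.
- move=> x y x' y' [kx ky cxy] [kx' ky' cxy']; split; auto.
  rewrite qmulA; apply: Cswap => //.
  by rewrite -qmulA; apply: Cmul => //; apply: Crev.
- move=> x y [kx ky cxy]; split; try exact: Kconj.
  rewrite -qconjM -qinvE; last by apply: unitM; apply: Kunit.
  by apply: Cinv; apply: Crev.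
- move=> x y [kx ky cxy]; split; try exact: Kconj.
  rewrite -qconjM -qinvE; last by apply: unitM; apply: Kunit.
  by apply: Cinv.
- move=> M [b [kb ->]]; right; rewrite /Mb /=; split => //; split => //; split; auto.
  by rewrite (qinvE (Kunit kb)) cancR; [apply: C1 | apply: Kunit].
- by move=> [_ [_ [_ _ c]]]; rewrite qmulq1 in c.
- by move=> [_ [e _]]; exfalso; apply: q1_neq0.
Qed.

Lemma C_HL h : C h -> H_L K K h.
Proof.
move=> ch; split; first exact: CK.
elim: ch => {h} [x [a [b [ka kb ->]]]| |x y _ IHx _ IHy|x cx IHx].
- have ua := Kunit ka; have ub := Kunit kb.
  have e : diagm (qmul (qmul (qmul a b) (qinv a)) (qinv b)) (q1 R) =
    mmul (mmul (mmul (Mb (qmul a b)) (Mb (q1 R))) (mmul (Mb (q1 R)) (Mb a)))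
         (mmul (Mb (q1 R)) (Mb b)).
    rewrite !MbMb /diagm !diag_mul qinv1 !qmulq1 !qmul1q.
    rewrite (qinvE (unitM ua ub)) qconjM (qinvE ua) (qinvE ub) !qmulA.
    by rewrite cancL' // cancL.
  have g : forall c, K c -> mgen (fun M => exists b0, K b0 /\ M = Mb b0) (Mb c).
    by move=> c kc; apply: gen_in; exists c.
  rewrite e; apply: gen_mul; [apply: gen_mul|]; [apply: gen_mul| apply: gen_mul| apply: gen_mul].
  1-6: by apply: g; auto.
- exact: gen_one.
- have -> : diagm (qmul x y) (q1 R) = mmul (diagm x (q1 R)) (diagm y (q1 R)).
    by rewrite /diagm diag_mul qmulq1.
  exact: gen_mul.
- have -> : diagm (qinv x) (q1 R) = mstar (diagm x (q1 R)).
    by rewrite /mstar /= qconj0 qconj1 qinvE //; apply: Kunit; apply: CK.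
  exact: gen_inv.
Qed.

Lemma normal_of (H : quat R -> Prop) : is_qsubgroup H -> (forall x, C x -> H x) ->
  (forall x, H x -> K x) -> normal_in H K.
Proof.
move=> Hs CH HK; split => // k h kk hh.
case: Hs => H1 Hmul Hinv.
have kh := HK _ hh.
have e : qmul (qmul k h) (qinv k) =
   qmul (qmul (qmul (qmul k h) (qconj k)) (qconj h)) h.
  by rewrite (qinvE (Kunit kk)) !qmulA cancL ?qmulq1 //; apply: Kunit.
by rewrite e; apply: Hmul => //; apply: CH; apply: Ccomm.
Qed.

Lemma main_grp :
  [/\ reflection_system K K,
      (forall h, H_L K K h <-> commK K h),
      (forall H : quat R -> Prop,
         is_qsubgroup H -> (forall x, commK K x -> H x) -> (forall x, H x -> K x) ->
         normal_in H K)
    & (forall G : qmat R -> Prop,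
         (exists H : quat R -> Prop, [/\ admissible K K H, canonical_form K K H
                                       & forall M, G M <-> GKLH K K H M])
         <->
         (exists H : quat R -> Prop,
            [/\ is_qsubgroup H, (forall x, commK K x -> H x), (forall x, H x -> K x)
              & forall M, G M <-> GKLH K K H M]))].
Proof.
split.
- split => //.
  + move=> x; split; first exact: gen_in.
    by elim=> {x} [x //| |x y _ ? _ ?|x _ ?]; auto.
  + by move=> a b ka kb; rewrite /qcirc; auto.
- by move=> h; split; [apply: HL_C | apply: C_HL].
- exact: normal_of.
- move=> G; split.
  + move=> [H [[[Hs HK _] _ _] _ GE]].
    pose H' := fun x => K x /\ GKLH K K H (diagm x (q1 R)).
    exists H'; split.
    * split.
      -- by split => //; apply: gen_one.
      -- move=> x y [kx gx] [ky gy]; split; first by auto.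
         have -> : diagm (qmul x y) (q1 R) = mmul (diagm x (q1 R)) (diagm y (q1 R)).
           by rewrite /diagm diag_mul qmulq1.
         exact: gen_mul.
      -- move=> x [kx gx]; split; first by auto.
         have -> : diagm (qinv x) (q1 R) = mstar (diagm x (q1 R)).
           by rewrite /mstar /= qconj0 qconj1 qinvE //; apply: Kunit.
         exact: gen_inv.
    * move=> x cx; have [kx hg] := C_HL cx; split => //.
      apply: mgen_mono hg => M [b [kb ->]]; apply: gen_in; right; exists b; auto.
    * by move=> x [].
    * move=> M; rewrite GE; split; apply: mgen_mono => N.
      -- case=> [[h [hh [->|->]]]|[b [kb ->]]]; apply: gen_in.
         ++ left; exists h; split; last by left.
            by split; [apply: HK | apply: gen_in; left; exists h; split; last left].
         ++ left; exists h; split; last by right.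
            by split; [apply: HK | apply: gen_in; left; exists h; split; last left].
         ++ by right; exists b.
      -- case=> [[h [[kh gh] [->|->]]]|[b [kb ->]]].
         ++ exact: gh.
         ++ have g1 : GKLH K K H (Mb (q1 R)) by apply: gen_in; right; exists (q1 R).
            by rewrite -Mb1_conj; apply: gen_mul => //; apply: gen_mul.
         ++ by apply: gen_in; right; exists b.
  + move=> [H [Hs CH HK GE]]; exists H; split => //.
    * split; [exact: normal_of | exact: HK |].
      move=> l kl; split=> // _; exists l, (q1 R); split => //; last by rewrite qmulq1.
      by case: Hs.
    * move=> b kb; split => // _; apply: gen_in; right; by exists b.
Qed.

End Grp.
End Q.

Theorem lemma4p2 (R : realType) (K : quat R -> Prop) :
  finite_subgroup_UH K ->
  [/\ reflection_system K K,
      (forall h, H_L K K h <-> commK K h),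
      (forall H : quat R -> Prop,
         is_qsubgroup H -> (forall x, commK K x -> H x) -> (forall x, H x -> K x) ->
         normal_in H K)
    & (forall G : qmat R -> Prop,
         (exists H : quat R -> Prop, [/\ admissible K K H, canonical_form K K H
                                       & forall M, G M <-> GKLH K K H M])
         <->
         (exists H : quat R -> Prop,
            [/\ is_qsubgroup H, (forall x, commK K x -> H x), (forall x, H x -> K x)
              & forall M, G M <-> GKLH K K H M]))].
Proof.
move=> [[K1 Kmul Kinv] Kunit _].
exact: main_grp.
Qed.
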